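(* Let $q$ be a distribution over prompts $\mathbf{x}$, let $p_{\mathrm{data}}(\cdot\mid\mathbf{x})$ be the target conditional distribution of responses, and let $\{p_{\boldsymbol{\theta}}(\cdot\mid\mathbf{x}) : \boldsymbol{\theta}\in\boldsymbol{\Theta}\}$ be a parametrized family of conditional distributions. Let $\ell(t)=\log(1+\exp(-t))$ be the logistic loss, let $\lambda>0$, and for $\boldsymbol{\theta},\boldsymbol{\theta}_t\in\boldsymbol{\Theta}$ define $$L_{\mathrm{SPIN}}(\boldsymbol{\theta},\boldsymbol{\theta}_t)=\mathbb{E}_{\mathbf{x}\sim q(\cdot),\,\mathbf{y}\sim p_{\mathrm{data}}(\cdot\mid\mathbf{x}),\,\mathbf{y}'\sim p_{\boldsymbol{\theta}_t}(\cdot\mid\mathbf{x})}\Big[\ell\Big(\lambda\log\frac{p_{\boldsymbol{\theta}}(\mathbf{y}\mid\mathbf{x})}{p_{\boldsymbol{\theta}_t}(\mathbf{y}\mid\mathbf{x})}-\lambda\log\frac{p_{\boldsymbol{\theta}}(\mathbf{y}'\mid\mathbf{x})}{p_{\boldsymbol{\theta}_t}(\mathbf{y}'\mid\mathbf{x})}\Big)\Big].$$ Suppose that the conditional distribution (normalized over $\mathbf{y}$ for each $\mathbf{x}$) proportional to $p_{\boldsymbol{\theta}_t}(\mathbf{y}\mid\mathbf{x})\big(p_{\mathrm{data}}(\mathbf{y}\mid\mathbf{x})/p_{\boldsymbol{\theta}_t}(\mathbf{y}\mid\mathbf{x})\big)^{1/\lambda}$ lies in $\{p_{\boldsymbol{\theta}}(\cdot\mid\mathbf{x})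 : \boldsymbol{\theta}\in\boldsymbol{\Theta}\}$, and that $\boldsymbol{\theta}_{t+1}$ is a global minimum of $\boldsymbol{\theta}\mapsto L_{\mathrm{SPIN}}(\boldsymbol{\theta},\boldsymbol{\theta}_t)$. Then $$p_{\boldsymbol{\theta}_{t+1}}(\mathbf{y}\mid\mathbf{x})\propto p_{\boldsymbol{\theta}_t}(\mathbf{y}\mid\mathbf{x})\big(p_{\mathrm{data}}(\mathbf{y}\mid\mathbf{x})/p_{\boldsymbol{\theta}_t}(\mathbf{y}\mid\mathbf{x})\big)^{1/\lambda},$$ where proportionality is in $\mathbf{y}$ for each fixed $\mathbf{x}$.
   Context: Prompts $\mathbf{x}$ and responses $\mathbf{y}$ are token sequences; $p_{\boldsymbol{\theta}}(\mathbf{y}\mid\mathbf{x})$ is the conditional probability assigned by the model with parameter $\boldsymbol{\theta}$. All conditional probabilities are assumed positive so that log-ratios are well defined. *)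

(* Defs.v *)
(* Prompts and responses are token sequences
   over a finite vocabulary V, i.e. elements of [seq V].  Expectations over
   these countable spaces are (nonnegative) extended-real sums [esum]. *)
From HB Require Import structures.
From mathcomp Require Import all_boot all_order all_algebra.
From mathcomp Require Import all_classical all_reals.
From mathcomp Require Import all_analysis.
Set Implicit Arguments. Unset Strict Implicit. Unset Printing Implicit Defensive.
Import Order.TTheory GRing.Theory Num.Theory.
Local Open Scope classical_set_scope.
Local Open Scope ring_scope.

Definition logistic_loss {R : realType} (t : R) : R := ln (1 + expR (- t)).

Definition L_SPIN {R : realType} {V : finType} {Theta : Type}
  (q : seq V -> R) (pdata : seq V -> seq V -> R)
  (p : Theta -> seq V -> seq V -> R) (lam : R) (th tht : Theta) : \bar R :=
  \esum_(x in [set: seq V]) \esum_(y in [set: seq V]) \esum_(y' in [set: seq V])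
    ((q x * pdata x y * p tht x y') *
     logistic_loss (lam * ln (p th x y / p tht x y)
                    - lam * ln (p th x y' / p tht x y')))%:E.

Definition spin_target {R : realType} {V : finType} {Theta : Type}
  (pdata : seq V -> seq V -> R) (p : Theta -> seq V -> seq V -> R)
  (lam : R) (tht : Theta) (x y : seq V) : R :=
  p tht x y * powR (pdata x y / p tht x y) (lam^-1).

Definition spin_norm {R : realType} {V : finType} {Theta : Type}
  (pdata : seq V -> seq V -> R) (p : Theta -> seq V -> seq V -> R)
  (lam : R) (tht : Theta) (x : seq V) : \bar R :=
  \esum_(y in [set: seq V]) (spin_target pdata p lam tht x y)%:E.

(* Main.v *)
Require Import Defs.
From HB Require Import structures.
From mathcomp Require Import all_boot all_order all_algebra.
From mathcomp Require Import all_classical all_reals.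
From mathcomp Require Import all_analysis.
From mathcomp Require Import ring lra.
Import Order.TTheory GRing.Theory Num.Theory.
Local Open Scope classical_set_scope.
Local Open Scope ring_scope.

Lemma esum_swap (R : realType) (T1 T2 : choiceType) (a : T1 -> T2 -> \bar R) :
  (forall i j, (0 <= a i j)%E) ->
  \esum_(i in [set: T1]) \esum_(j in [set: T2]) a i j =
  \esum_(j in [set: T2]) \esum_(i in [set: T1]) a i j.
Proof.
move=> a0; rewrite !esum_esum //.
rewrite (@reindex_esum R _ _ ([set: T2] `*`` (fun _ => [set: T1])) _ (fun k : T2 * T1 => (k.2, k.1))).
  by [].
split.
- by move=> [] ? ? _.
- by move=> [? ?] [? ?] _ _ [-> ->].
- by move=> [i j] _; exists (j, i).
Qed.

Lemma ln_lb {R : realType} {w : R} : 0 < w ->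
  (1 - w^-1 <= ln w) /\ (w != 1 -> 1 - w^-1 < ln w).
Proof.
move=> w0.
have ew : w^-1 = expR (- ln w) by rewrite expRN lnK.
rewrite ew; split.
  by have := expR_ge1Dx (- ln w); lra.
move=> w1; have : - ln w != 0.
  by rewrite oppr_eq0 ln_eq0.
by move/expR_gt1Dx; lra.
Qed.

Notation ll := logistic_loss.

Lemma key_ineq (R : realType) (a b s t : R) : 0 < a -> 0 < b ->
  expR (- s) = b / a ->
  (a * ll s + b * ll (- s) <= a * ll t + b * ll (- t)) /\
  (t != s -> a * ll s + b * ll (- s) < a * ll t + b * ll (- t)).
Proof.
move=> a0 b0 es.
have es' : expR s = a / b.
  by rewrite -[s]opprK expRN es invf_div.
rewrite /ll opprK es es'.
set E := expR (- t).
have E0 : 0 < E by rewrite expR_gt0.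
have et : expR t = E^-1 by rewrite /E expRN invrK.
rewrite opprK et.
have p1 : 0 < 1 + b / a by rewrite addr_gt0 // divr_gt0.
have p2 : 0 < 1 + a / b by rewrite addr_gt0 // divr_gt0.
have p3 : 0 < 1 + E by rewrite addr_gt0.
have p4 : 0 < 1 + E^-1 by rewrite addr_gt0 // invr_gt0.
set u := (1 + E) / (1 + b / a).
set v := (1 + E^-1) / (1 + a / b).
have u0 : 0 < u by rewrite divr_gt0.
have v0 : 0 < v by rewrite divr_gt0.
have lu : ln (1 + E) = ln u + ln (1 + b / a).
  by rewrite /u ln_div ?posrE // subrK.
have lv : ln (1 + E^-1) = ln v + ln (1 + a / b).
  by rewrite /v ln_div ?posrE // subrK.
rewrite lu lv.
have id : a * (1 - u^-1) + b * (1 - v^-1) = 0.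
  rewrite /u /v !invf_div; field.
  by rewrite !lt0r_neq0 //= addrC.
have [hu1 hu2] := ln_lb u0.
have [hv1 hv2] := ln_lb v0.
have ha : a * (1 - u^-1) <= a * ln u by rewrite ler_wpM2l // ltW.
have hb : b * (1 - v^-1) <= b * ln v by rewrite ler_wpM2l // ltW.
split; first by lra.
move=> ts.
have un1 : u != 1.
  apply/negP => /eqP u1; move/negP: ts; apply; apply/eqP.
  have : 1 + E = 1 + b / a.
    exact: divr1_eq u1.
  move/addrI; rewrite /E -es => /expR_inj /eqP; rewrite eqr_opp => /eqP.
  done.
have ha' : a * (1 - u^-1) < a * ln u by rewrite ltr_pM2l // hu2.
lra.
Qed.

Lemma esumZ_le (R : realType) (T : choiceType) (c : R) (f : T -> R) :
  0 <= c -> (forall i, 0 <= f i) ->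
  (\esum_(i in [set: T]) (c * f i)%:E <= c%:E * \esum_(i in [set: T]) (f i)%:E)%E.
Proof.
move=> c0 f0; apply: ge_ereal_sup => _ [X [finX _] <-].
rewrite fsbig_finite //=.
under eq_bigr do rewrite EFinM.
rewrite -ge0_sume_distrr; last by move=> i _; rewrite lee_fin.
apply: lee_wpmul2l; first by rewrite lee_fin.
rewrite -fsbig_finite //.
apply: ereal_sup_ubound; exists X => //.
Qed.

Lemma le_esumT (R : realType) (T : choiceType) (a : T -> \bar R) i :
  (forall j, (0 <= a j)%E) -> (a i <= \esum_(j in [set: T]) a j)%E.
Proof.
move=> a0; apply: esum_ge; exists [set i]; first by split; [exact: finite_set1|].
by rewrite fsbig_set1.
Qed.

Lemma esum3D (R : realType) (T1 T2 T3 : choiceType) (f g : T1 -> T2 -> T3 -> R) :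
  (forall i j k, 0 <= f i j k) -> (forall i j k, 0 <= g i j k) ->
  \esum_(i in [set: T1]) \esum_(j in [set: T2]) \esum_(k in [set: T3]) (f i j k + g i j k)%:E =
  (\esum_(i in [set: T1]) \esum_(j in [set: T2]) \esum_(k in [set: T3]) (f i j k)%:E +
  \esum_(i in [set: T1]) \esum_(j in [set: T2]) \esum_(k in [set: T3]) (g i j k)%:E)%E.
Proof.
move=> f0 g0.
rewrite -esumD; last 2 first.
- by move=> i _; apply: esum_ge0 => j _; apply: esum_ge0 => k _; rewrite lee_fin.
- by move=> i _; apply: esum_ge0 => j _; apply: esum_ge0 => k _; rewrite lee_fin.
apply: eq_esum => i _; rewrite -esumD; last 2 first.
- by move=> j _; apply: esum_ge0 => k _; rewrite lee_fin.
- by move=> j _; apply: esum_ge0 => k _; rewrite lee_fin.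
apply: eq_esum => j _; rewrite -esumD; last 2 first.
- by move=> k _; rewrite lee_fin.
- by move=> k _; rewrite lee_fin.
by apply: eq_esum => k _; rewrite EFinD.
Qed.

Lemma ext_arith (R : realType) (a b c : \bar R) :
  (0 <= a)%E -> (a <= b)%E -> (b <= 1)%E -> (0 <= c)%E -> a + a = b + b + c -> c = 0.
Proof.
case: a => [a||] //; case: b => [b||] //; case: c => [c||] //=.
- rewrite !lee_fin => ? ? ? ? [] ?; congr (_%:E); lra.
Qed.

Theorem theorem5p4 (R : realType) (V : finType) (Theta : Type)
  (q : seq V -> R) (pdata : seq V -> seq V -> R)
  (p : Theta -> seq V -> seq V -> R) (lam : R) (tht tht1 : Theta) :
  (* q is a probability distribution over prompts *)
  (forall x, 0 <= q x) ->
  \esum_(x in [set: seq V]) (q x)%:E = 1%E ->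
  (* pdata(.|x) is a conditional distribution, with positive probabilities *)
  (forall x y, 0 < pdata x y) ->
  (forall x, \esum_(y in [set: seq V]) (pdata x y)%:E = 1%E) ->
  (* each p_theta(.|x) is a conditional distribution, positive probabilities *)
  (forall th x y, 0 < p th x y) ->
  (forall th x, \esum_(y in [set: seq V]) (p th x y)%:E = 1%E) ->
  0 < lam ->
  (* realizability: the normalized target lies in the model family *)
  (exists thstar : Theta, forall x y,
      p thstar x y = spin_target pdata p lam tht x y
                     / fine (spin_norm pdata p lam tht x)) ->
  (* theta_{t+1} is a global minimizer of theta |-> L_SPIN(theta, theta_t) *)
  (forall th : Theta,
      (L_SPIN q pdata p lam tht1 tht <= L_SPIN q pdata p lam th tht)%E) ->
  (* conclusion: proportionality in y, for every prompt in the support of q *)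
  forall x, 0 < q x ->
    exists c : R, 0 < c /\
      forall y, p tht1 x y = c * spin_target pdata p lam tht x y.
Proof.
Proof.
move=> q0 qsum pd0 pdsum p0 psum lam0 [ths Hs] Hmin x qx.
pose g th x0 y := lam * ln (p th x0 y / p tht x0 y).
pose T th x0 y y' := q x0 * pdata x0 y * p tht x0 y' * logistic_loss (g th x0 y - g th x0 y').
have LE th : L_SPIN q pdata p lam th tht = \esum_(x in [set: seq V]) \esum_(y in [set: seq V]) \esum_(y' in [set: seq V]) (T th x y y')%:E by [].
have ll0 t : 0 <= logistic_loss t.
  by rewrite /logistic_loss; apply: ln_ge0; rewrite lerDl ltW // expR_gt0.
have T0 th x0 y y' : 0 <= T th x0 y y'.
  rewrite /T; apply: mulr_ge0; last exact: ll0.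
  apply: mulr_ge0; last exact: ltW.
  apply: mulr_ge0; [exact: q0|exact: ltW].
pose r x0 y := pdata x0 y / p tht x0 y.
have r0 x0 y : 0 < r x0 y by rewrite divr_gt0.
have gs x0 : exists K, forall y, g ths x0 y = ln (r x0 y) - K.
  pose z := fine (spin_norm pdata p lam tht x0).
  have z0 : 0 < z.
    have zge : 0 <= z.
      apply: fine_ge0; apply: esum_ge0 => y _; rewrite lee_fin /spin_target.
      by apply: mulr_ge0; [exact: ltW|exact: powR_ge0].
    rewrite lt_neqAle zge andbT; apply/eqP => zz.
    by have := p0 ths x0 [::]; rewrite Hs -/z -zz invr0 mulr0 ltxx.
  exists (lam * ln z) => y.
  rewrite /g Hs /spin_target -/z.
  have pt0 := p0 tht x0 y.
  rewrite (_ : _ / z / _ = powR (r x0 y) lam^-1 / z); last first.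
    rewrite /r; field; rewrite !lt0r_neq0 //.
  rewrite ln_div ?posrE ?powR_gt0 // ln_powR mulrBr mulrA mulfV ?mul1r //.
  by rewrite lt0r_neq0.
have gd x0 y y' : g ths x0 y - g ths x0 y' = ln (r x0 y) - ln (r x0 y').
  by have [K HK] := gs x0; rewrite !HK; ring.
have sym th x0 y y' : T th x0 y y' + T th x0 y' y =
    q x0 * ((pdata x0 y * p tht x0 y') * logistic_loss (g th x0 y - g th x0 y') +
            (pdata x0 y' * p tht x0 y) * logistic_loss (- (g th x0 y - g th x0 y'))).
  by rewrite /T opprB; ring.
have es x0 y y' : expR (- (ln (r x0 y) - ln (r x0 y'))) =
    (pdata x0 y' * p tht x0 y) / (pdata x0 y * p tht x0 y').
  rewrite opprB expRD expRN !lnK ?posrE // /r.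
  have := p0 tht x0 y; have := p0 tht x0 y'; have := pd0 x0 y; have := pd0 x0 y'.
  by move=> *; field; rewrite !lt0r_neq0.
pose D x0 y y' := T tht1 x0 y y' + T tht1 x0 y' y - (T ths x0 y y' + T ths x0 y' y).
have D0 x0 y y' : 0 <= D x0 y y'.
  rewrite /D sym sym subr_ge0 gd; apply: ler_wpM2l; first exact: q0.
  by have [] := @key_ineq R _ _ _ (g tht1 x0 y - g tht1 x0 y') (mulr_gt0 (pd0 x0 y) (p0 tht x0 y'))
     (mulr_gt0 (pd0 x0 y') (p0 tht x0 y)) (es x0 y y').
have E2 th : \esum_(x0 in [set: seq V]) \esum_(y in [set: seq V]) \esum_(y' in [set: seq V])
    (T th x0 y y' + T th x0 y' y)%:E = (L_SPIN q pdata p lam th tht + L_SPIN q pdata p lam th tht)%E.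
  rewrite (@esum3D R _ _ _ (T th) (fun a b c => T th a c b) (T0 th) (fun a b c => T0 th a c b)).
  rewrite !LE; apply: (congr2 (fun a b => (a + b)%E)).
    by apply: eq_esum => i _; apply: eq_esum => j _; apply: eq_esum => k _.
  apply: eq_esum => x0 _.
  by apply: (@esum_swap R _ _ (fun a b => (T th x0 b a)%:E)) => i j; rewrite lee_fin.
have E3 : \esum_(x0 in [set: seq V]) \esum_(y in [set: seq V]) \esum_(y' in [set: seq V])
    (T tht1 x0 y y' + T tht1 x0 y' y)%:E =
    (L_SPIN q pdata p lam ths tht + L_SPIN q pdata p lam ths tht +
     \esum_(x0 in [set: seq V]) \esum_(y in [set: seq V]) \esum_(y' in [set: seq V]) (D x0 y y')%:E)%E.
  rewrite -E2 -(@esum3D R _ _ _ (fun a b c => T ths a b c + T ths a c b) D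
    (fun a b c => addr_ge0 (T0 ths a b c) (T0 ths a c b)) D0).
  apply: eq_esum => x0 _; apply: eq_esum => y _; apply: eq_esum => y' _.
  by congr (_%:E); rewrite /D [RHS]addrC subrK.
have Tb x0 y y' : T ths x0 y y' <= q x0 * p tht x0 y * pdata x0 y'.
  rewrite /T gd /logistic_loss es.
  have ha := mulr_gt0 (pd0 x0 y) (p0 tht x0 y').
  have hb := mulr_gt0 (pd0 x0 y') (p0 tht x0 y).
  have hba : 0 < pdata x0 y' * p tht x0 y / (pdata x0 y * p tht x0 y') by rewrite divr_gt0.
  have hqa : 0 <= q x0 * pdata x0 y * p tht x0 y'.
    by apply: mulr_ge0; [apply: mulr_ge0; [exact: q0| exact: ltW]| exact: ltW].
  apply: le_trans (ler_wpM2l hqa (le_ln1Dx _)) _; first lra.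
  rewrite le_eqVlt; apply/orP; left; apply/eqP; field.
  by rewrite !lt0r_neq0.
have Lb : (L_SPIN q pdata p lam ths tht <= 1)%E.
  rewrite LE -qsum; apply: le_esum => x0 _.
  apply: (@le_trans _ _ (\esum_(y in [set: seq V]) (q x0 * p tht x0 y)%:E)%E).
    apply: le_esum => y _.
    apply: (@le_trans _ _ (\esum_(y' in [set: seq V]) (q x0 * p tht x0 y * pdata x0 y')%:E)%E).
      by apply: le_esum => y' _; rewrite lee_fin.
    apply: le_trans (@esumZ_le R _ (q x0 * p tht x0 y) (pdata x0) _ _) _.
    - by apply: mulr_ge0; [exact: q0|exact: ltW].
    - by move=> i; exact: ltW.
    by rewrite pdsum mule1.
  apply: le_trans (@esumZ_le R _ (q x0) (p tht x0) _ _) _.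
  - exact: q0.
  - by move=> i; exact: ltW.
  by rewrite psum mule1.
have S0 : \esum_(x0 in [set: seq V]) \esum_(y in [set: seq V]) \esum_(y' in [set: seq V]) (D x0 y y')%:E = 0%E.
  apply: (@ext_arith R (L_SPIN q pdata p lam tht1 tht) (L_SPIN q pdata p lam ths tht)) => //.
  - by rewrite LE; apply: esum_ge0 => ? _; apply: esum_ge0 => ? _; apply: esum_ge0 => ? _; rewrite lee_fin.
  - by apply: esum_ge0 => ? _; apply: esum_ge0 => ? _; apply: esum_ge0 => ? _; rewrite lee_fin.
  - exact: (etrans (esym (E2 tht1)) E3).
have Dz y y' : D x y y' = 0.
  have H : ((D x y y')%:E <= \esum_(x0 in [set: seq V]) \esum_(y in [set: seq V]) \esum_(y' in [set: seq V]) (D x0 y y')%:E)%E.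
    apply: le_trans (@le_esumT R _ _ x _); last first.
      by move=> ?; apply: esum_ge0 => ? _; apply: esum_ge0 => ? _; rewrite lee_fin.
    apply: le_trans (@le_esumT R _ _ y _); last first.
      by move=> ?; apply: esum_ge0 => ? _; rewrite lee_fin.
    apply: le_trans (@le_esumT R _ _ y' _) => //.
    by move=> ?; rewrite lee_fin.
  move: H; rewrite S0 lee_fin => H.
  by apply/eqP; rewrite eq_le H D0.
have teq y y' : g tht1 x y - g tht1 x y' = ln (r x y) - ln (r x y').
  apply/eqP; apply/negPn/negP => hne.
  have [_ /(_ hne) hlt] := @key_ineq R _ _ _ (g tht1 x y - g tht1 x y') (mulr_gt0 (pd0 x y) (p0 tht x y'))
     (mulr_gt0 (pd0 x y') (p0 tht x y)) (es x y y').
  move: (Dz y y'); rewrite /D sym sym gd -mulrBr => /eqP; rewrite mulf_eq0 (gt_eqF qx) /= subr_eq0.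
  by rewrite gt_eqF.
pose C := g tht1 x [::] - ln (r x [::]).
exists (expR (lam^-1 * C)); split; first exact: expR_gt0.
move=> y.
have hy : g tht1 x y = ln (r x y) + C by have := teq y [::]; rewrite /C; lra.
have pt0 := p0 tht x y.
have hq : p tht1 x y / p tht x y = expR (lam^-1 * (ln (r x y) + C)).
  rewrite -hy /g mulrA mulVf ?mul1r ?lnK ?lt0r_neq0 // posrE divr_gt0 //.
rewrite /spin_target /powR -/(r x y) gt_eqF // mulrDr expRD in hq *.
have -> : p tht1 x y = p tht x y * (p tht1 x y / p tht x y).
  by field; exact: lt0r_neq0.
by rewrite hq; ring.
Qed.
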